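(* Let $W$ be a (1-safe) DAW-net and $\mathrm{bc}(W)$ its $\mathcal{BC}$ encoding. For any $\ell\ge0$, if $X$ is a stable model of $P_\ell(\mathrm{bc}(W))$, then $$\rho=\Phi^-_0(X)\xrightarrow{\tau_0(X)}\Phi^-_1(X)\xrightarrow{\tau_1(X)}\cdots\xrightarrow{\tau_{\ell-1}(X)}\Phi^-_\ell(X)$$ is a sequence of valid firings of $W$ of length $\ell$.
   Context: **DAW-nets.** Data model $\mathcal{D}=(\mathcal{V},\Delta,\mathrm{dm},\mathrm{ord})$: variables; finite domains via total surjective $\mathrm{dm}$; partial orders $\le_{\Delta_i}$ on some domains. Assignments: partial $\eta$ with $\eta(v)\in\mathrm{dm}(v)$. Guards $\Phi::=\mathit{true}\mid\mathrm{def}(v)\mid t_1=t_2\mid t_1\le t_2\mid\neg\Phi\mid\Phi\wedge\Phi$; with $t[\eta]=\eta(t)$ for variables on which $\eta$ is defined and $t$ otherwise: $\mathrm{def}(v)$ iff $\eta(v)$ defined; $t_1=t_2$ iff $t_1[\eta],t_2[\eta]$ are equal constants; $t_1\le t_2$ iff both lie in some ordered $\Delta_i$ and $t_1[\eta]\le_{\Delta_i}t_2[\eta]$. A DAW-net $W=\langle\mathcal{D},(P,T,F),\mathrm{wr},\mathrm{gd}\rangle$: workflow Petri net with places $\mathit{start},\mathit{sink}$ (presets ${}^\bullet t$, postsets $t^\bullet$), partial functions $\mathrm{wr}(t)$ with $\mathrm{wr}(t)(v)\subseteq\mathrm{dm}(v)$, guards $\mathrm{gd}(t)$. A firing $(M,\eta)\xrightarrow{t}(M',\eta')$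 is valid iff $\{p\mid M(p)>0\}\supseteq{}^\bullet t$; $\mathcal{D},\eta\models\mathrm{gd}(t)$; $M'(p)=M(p)-1$ on ${}^\bullet t\setminus t^\bullet$, $M(p)+1$ on $t^\bullet\setminus{}^\bullet t$, else $M(p)$; $\mathrm{dom}(\eta')=\mathrm{dom}(\eta)\cup\{v\mid\mathrm{wr}(t)(v)\ne\emptyset\}\setminus\{v\mid\mathrm{wr}(t)(v)=\emptyset\}$, $\eta'(v)\in\mathrm{wr}(t)(v)$ for $v\in\mathrm{dom}(\mathrm{wr}(t))$, else $\eta'(v)=\eta(v)$. $\mathcal{V}'$: finite set of variables of $W$; $\mathrm{adm}(v)=\bigcup_t\mathrm{wr}(t)(v)$. $W$ is assumed 1-safe. **$\mathcal{BC}$ semantics.** Laws: dynamic ''$A_0$ after $A'_1,\dots,A'_n$ ifcons $A_{n+1},\dots,A_m$'', static ''$A_0$ if ... ifcons ...'', ''initially $f=v$''. $P_\ell(B)$ is the disjunctive program (classical $\neg$, default $\sim$) containing: static laws as $i{:}A_0\leftarrow i{:}A_1,\dots,i{:}A_n,\sim\neg(i{:}A_{n+1}),\dots,\sim\neg(i{:}A_m)$, $0\le i\le\ell$; dynamic laws as $i{+}1{:}A_0\leftarrow i{:}A'_1,\dots,i{:}A'_n,\sim\neg(i{+}1{:}A_{n+1}),\dots,\sim\neg(i{+}1{:}A_m)$, $0\le i<\ell$ (constraints if $A_0$ is false); facts $0{:}f=v$ for ''initially $f=v$''; $0{:}f=v\vee\neg(0{:}f=v)$; $i{:}a\vee\neg(i{:}a)$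 for action constants, $i<\ell$; for $i\le\ell$ and fluent $f$ with domain $v_1,\dots,v_k$: $\leftarrow\sim(i{:}f=v_1),\dots,\sim(i{:}f=v_k)$ and $\neg(i{:}f=v)\leftarrow i{:}f=w$ ($v\neq w$). $\sigma_i(X)=\{f\mapsto o\mid(i{:}f=o)\in X\}$. **The encoding $\mathrm{bc}(W)$.** Fluents $v\in\mathcal{V}'$ (domain $\mathrm{adm}(v)\cup\{\mathrm{null}\}$), Boolean fluents $p\in P$ and $\mathit{trans}$; action constants $t\in T$. Laws: ''$v=o$ after $v=o$ ifcons $v=o$''; ''$p=o$ after $p=o$ ifcons $p=o$''; for each $t$: ''$p=\mathrm{false}$ after $t$'' ($p\in{}^\bullet t\setminus t^\bullet$), ''$p=\mathrm{true}$ after $t$'' ($p\in t^\bullet\setminus{}^\bullet t$), ''$v=d$ after $t$ ifcons $v=d$'' ($d\in\mathrm{wr}(t)(v)$), ''$v=\mathrm{null}$ after $t$'' ($\mathrm{wr}(t)(v)=\emptyset$), ''false after $t$ ifcons $v=d$'' ($\mathrm{wr}(t)(v)\ne\emptyset$, $d\in\{\mathrm{null}\}\cup\mathrm{adm}(v)\setminus\mathrm{wr}(t)(v)$), ''false after $t,s$'' ($t\neq s$), ''false after $t,p=\mathrm{false}$'' ($p\in{}^\bullet t$), ''$\mathit{trans}=\mathrm{true}$ after $t$''; ''initially $\mathit{start}=\mathrm{true}$'', ''initially $p=\mathrm{false}$'' ($p\ne\mathit{start}$), ''initially $v=\mathrm{null}$'', ''initially $\mathit{trans}=\mathrm{true}$'';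 and for each $t$ with $\mathrm{gd}(t)\not\equiv\mathit{true}$, for a chosen formula $\bigvee_k t^k_1\wedge\dots\wedge t^k_{n_k}$ equivalent to $\neg\mathrm{gd}(t)$ with terms $v=o$ or $\neg\mathrm{def}(v)$, the laws ''false after $t,[\![t^k_1]\!],\dots,[\![t^k_{n_k}]\!]$'', with $[\![v=o]\!]=(v=o)$, $[\![\neg\mathrm{def}(v)]\!]=(v=\mathrm{null})$. **Inverse mapping.** For a stable model $X$ of $P_\ell(\mathrm{bc}(W))$ and $0\le i\le\ell$, $\Phi^-_i(X)=(M_i,\eta_i)$ with $M_i(p)=1$ if $\sigma_i(X)(p)=\mathrm{true}$ and $M_i(p)=0$ if $\sigma_i(X)(p)=\mathrm{false}$ ($p\in P$), and $\eta_i=\{(v,o)\mid v\in\mathcal{V}',\sigma_i(X)(v)=o,o\ne\mathrm{null}\}$; for $0\le i<\ell$, $\tau_i(X)$ is the action constant $a$ with $(i{:}a)\in X$. *)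

(* Defs.v *)
From Stdlib Require Import List Relations ClassicalEpsilon.
Import ListNotations.

Record data_model := DataModel {
  dvar : Type;
  dconst : Type;
  ddomain : Type;                   (* index set of the domains Delta *)
  dvals : ddomain -> list dconst;
  dm : dvar -> ddomain;
  dord : ddomain -> option (dconst -> dconst -> Prop)
}.

Definition partial_order_on {C : Type} (A : list C) (R : C -> C -> Prop) : Prop :=
  (forall x, In x A -> R x x) /\
  (forall x y, In x A -> In y A -> R x y -> R y x -> x = y) /\
  (forall x y z, In x A -> In y A -> In z A -> R x y -> R y z -> R x z).

Definition wf_data_model (D : data_model) : Prop :=
  (forall d : ddomain D, exists v, dm D v = d) /\
  (forall d R, dord D d = Some R -> partial_order_on (dvals D d) R).

Inductive term (D : data_model) :=
| TVar : dvar D -> term D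
| TConst : dconst D -> term D.
Arguments TVar {D}. Arguments TConst {D}.

Inductive guard (D : data_model) :=
| GTrue : guard D
| GDef : dvar D -> guard D
| GEq : term D -> term D -> guard D
| GLe : term D -> term D -> guard D
| GNot : guard D -> guard D
| GAnd : guard D -> guard D -> guard D.
Arguments GTrue {D}. Arguments GDef {D}. Arguments GEq {D}.
Arguments GLe {D}. Arguments GNot {D}. Arguments GAnd {D}.

(* (partial) assignments: eta v = None means eta undefined on v *)
Definition assignment (D : data_model) := dvar D -> option (dconst D).

Definition is_assignment (D : data_model) (eta : assignment D) : Prop :=
  forall v c, eta v = Some c -> In c (dvals D (dm D v)).

(* t[eta] when it is a constant (None: t[eta] is an undefined variable) *)
Definition tconst {D : data_model} (eta : assignment D) (t : term D)
  : option (dconst D) :=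
  match t with TVar v => eta v | TConst c => Some c end.

Fixpoint gsat {D : data_model} (eta : assignment D) (g : guard D) : Prop :=
  match g with
  | GTrue => True
  | GDef v => eta v <> None
  | GEq t1 t2 => exists c, tconst eta t1 = Some c /\ tconst eta t2 = Some c
  | GLe t1 t2 => exists d R c1 c2,
      dord D d = Some R /\ tconst eta t1 = Some c1 /\ tconst eta t2 = Some c2 /\
      In c1 (dvals D d) /\ In c2 (dvals D d) /\ R c1 c2
  | GNot g1 => ~ gsat eta g1
  | GAnd g1 g2 => gsat eta g1 /\ gsat eta g2
  end.

Definition term_occ {D : data_model} (v : dvar D) (t : term D) : Prop :=
  match t with TVar w => w = v | TConst _ => False end.

Fixpoint gvar_occ {D : data_model} (v : dvar D) (g : guard D) : Prop :=
  match g with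
  | GTrue => False
  | GDef w => w = v
  | GEq t1 t2 | GLe t1 t2 => term_occ v t1 \/ term_occ v t2
  | GNot g1 => gvar_occ v g1
  | GAnd g1 g2 => gvar_occ v g1 \/ gvar_occ v g2
  end.

Record dawnet (D : data_model) := DAWNet {
  place : Type;
  trans : Type;
  pre : place -> trans -> Prop;
  post : trans -> place -> Prop;
  start : place;
  sink : place;
  wr : trans -> dvar D -> option (list (dconst D));
      (* partial function wr(t): None = undefined on v; Some l = the set l *)
  gd : trans -> guard D
}.
Arguments place {D}. Arguments trans {D}. Arguments pre {D}.
Arguments post {D}. Arguments start {D}. Arguments sink {D}.
Arguments wr {D}. Arguments gd {D}.

Inductive node {D : data_model} (W : dawnet D) :=
| NP : place W -> node W
| NT : trans W -> node W.
Arguments NP {D W}. Arguments NT {D W}.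

Inductive flow {D : data_model} (W : dawnet D) : node W -> node W -> Prop :=
| flow_pt : forall p t, pre W p t -> flow W (NP p) (NT t)
| flow_tp : forall t p, post W t p -> flow W (NT t) (NP p).

Definition is_dawnet {D : data_model} (W : dawnet D) : Prop :=
  wf_data_model D /\
  (exists lp, forall p : place W, In p lp) /\
  (exists lt, forall t : trans W, In t lt) /\
  (forall t, ~ post W t (start W)) /\
  (forall t, ~ pre W (sink W) t) /\
  (forall x : node W, clos_refl_trans _ (flow W) (NP (start W)) x /\
                      clos_refl_trans _ (flow W) x (NP (sink W))) /\
  (forall t v l c, wr W t v = Some l -> In c l -> In c (dvals D (dm D v))) /\
  (forall t, exists lv, forall v, wr W t v <> None -> In v lv).

Definition marking {D : data_model} (W : dawnet D) := place W -> nat.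

Definition wr_nonempty {D : data_model} (W : dawnet D) t v : Prop :=
  exists l c, wr W t v = Some l /\ In c l.
Definition wr_empty {D : data_model} (W : dawnet D) t v : Prop :=
  exists l, wr W t v = Some l /\ forall c, ~ In c l.

Definition valid_firing {D : data_model} (W : dawnet D)
    (M : marking W) (eta : assignment D) (t : trans W)
    (M' : marking W) (eta' : assignment D) : Prop :=
  (forall p, pre W p t -> M p > 0) /\
  gsat eta (gd W t) /\
  (forall p,
     (pre W p t /\ ~ post W t p -> M' p = M p - 1) /\
     (post W t p /\ ~ pre W p t -> M' p = M p + 1) /\
     (~ (pre W p t /\ ~ post W t p) -> ~ (post W t p /\ ~ pre W p t) ->
        M' p = M p)) /\
  (forall v, eta' v <> None <->
             ((eta v <> None \/ wr_nonempty W t v) /\ ~ wr_empty W t v)) /\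
  (forall v l c, wr W t v = Some l -> eta' v = Some c -> In c l) /\
  (forall v, wr W t v = None -> eta' v = eta v).

Inductive reachable {D : data_model} (W : dawnet D)
  : marking W -> assignment D -> Prop :=
| reach_init : forall (M : marking W) (eta : assignment D),
    M (start W) = 1 -> (forall p, p <> start W -> M p = 0) ->
    (forall v, eta v = None) -> reachable W M eta
| reach_step : forall M eta t M' eta',
    reachable W M eta -> valid_firing W M eta t M' eta' -> reachable W M' eta'.

Definition one_safe {D : data_model} (W : dawnet D) : Prop :=
  forall M eta, reachable W M eta -> forall p, M p <= 1.

Definition inV' {D : data_model} (W : dawnet D) (v : dvar D) : Prop :=
  (exists t, wr W t v <> None) \/ (exists t, gvar_occ v (gd W t)).

Definition adm {D : data_model} (W : dawnet D) (v : dvar D) (c : dconst D) : Prop :=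
  exists t l, wr W t v = Some l /\ In c l.

Section BC.
Variables Fl Ac Val : Type.

(* BC atoms: f = x for a fluent f, or a (i.e. a = true) for an action a *)
Inductive batom := BF (f : Fl) (x : Val) | BA (a : Ac).

(* "A0 if A1..An ifcons A(n+1)..Am" ; head None = false *)
Record static_law := StaticLaw {
  sl_head : option (Fl * Val); sl_if : list batom; sl_ifcons : list batom }.
(* "A0 after A1'..An' ifcons A(n+1)..Am" ; head None = false *)
Record dynamic_law := DynamicLaw {
  dl_head : option (Fl * Val); dl_after : list batom; dl_ifcons : list batom }.

Record bc_desc := BCDesc {
  bc_fluent : Fl -> Prop;
  bc_dom : Fl -> Val -> Prop;
  bc_action : Ac -> Prop;
  bc_static : static_law -> Prop;
  bc_dynamic : dynamic_law -> Prop;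
  bc_initially : Fl -> Val -> Prop
}.

Inductive patom := PA (i : nat) (A : batom).
Inductive lit := LPos (a : patom) | LNeg (a : patom).

(* head: disjunction; pos: positive body; neg: literals L occurring as ~L
   (default negation) in the body *)
Record rule := Rule { r_head : list lit; r_pos : list lit; r_neg : list lit }.

Definition at_ (i : nat) (A : batom) : lit := LPos (PA i A).
Definition cneg (i : nat) (A : batom) : lit := LNeg (PA i A).

Definition head_lits (i : nat) (h : option (Fl * Val)) : list lit :=
  match h with Some (f, x) => [at_ i (BF f x)] | None => [] end.

Inductive P_ell (B : bc_desc) (ell : nat) : rule -> Prop :=
| P_static : forall L i, bc_static B L -> i <= ell ->
    P_ell B ell (Rule (head_lits i (sl_head L)) (map (at_ i) (sl_if L))
                      (map (cneg i) (sl_ifcons L)))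
| P_dynamic : forall L i, bc_dynamic B L -> i < ell ->
    P_ell B ell (Rule (head_lits (S i) (dl_head L)) (map (at_ i) (dl_after L))
                      (map (cneg (S i)) (dl_ifcons L)))
| P_init : forall f x, bc_initially B f x ->
    P_ell B ell (Rule [at_ 0 (BF f x)] [] [])
| P_init_choice : forall f x, bc_fluent B f -> bc_dom B f x ->
    P_ell B ell (Rule [at_ 0 (BF f x); cneg 0 (BF f x)] [] [])
| P_act_choice : forall a i, bc_action B a -> i < ell ->
    P_ell B ell (Rule [at_ i (BA a); cneg i (BA a)] [] [])
| P_exist : forall f i (l : list Val), bc_fluent B f -> i <= ell ->
    (forall x, In x l <-> bc_dom B f x) ->
    P_ell B ell (Rule [] [] (map (fun x => at_ i (BF f x)) l))
| P_uniq : forall f i x y, bc_fluent B f -> i <= ell ->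
    bc_dom B f x -> bc_dom B f y -> x <> y ->
    P_ell B ell (Rule [cneg i (BF f x)] [at_ i (BF f y)] []).

(* stable models (answer sets) of a disjunctive program with classical
   negation; sets of literals are predicates *)
Definition program := rule -> Prop.

Definition consistent (X : lit -> Prop) : Prop :=
  forall a, ~ (X (LPos a) /\ X (LNeg a)).

Definition closed_reduct (P : program) (X Y : lit -> Prop) : Prop :=
  forall r, P r ->
    (forall l, In l (r_neg r) -> ~ X l) ->
    (forall l, In l (r_pos r) -> Y l) ->
    exists l, In l (r_head r) /\ Y l.

Definition stable_model (P : program) (X : lit -> Prop) : Prop :=
  consistent X /\ closed_reduct P X X /\
  (forall Y : lit -> Prop, (forall l, Y l -> X l) -> closed_reduct P X Y ->
     forall l, X l -> Y l).

End BC.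

Arguments BF {Fl Ac Val}. Arguments BA {Fl Ac Val}.
Arguments DynamicLaw {Fl Ac Val}. Arguments PA {Fl Ac Val}.
Arguments LPos {Fl Ac Val}. Arguments LNeg {Fl Ac Val}.
Arguments BCDesc {Fl Ac Val}.
Arguments P_ell {Fl Ac Val}. Arguments stable_model {Fl Ac Val}.
Arguments consistent {Fl Ac Val}. Arguments closed_reduct {Fl Ac Val}.
Arguments Rule {Fl Ac Val}. Arguments at_ {Fl Ac Val}. Arguments cneg {Fl Ac Val}.

Inductive fluent {D : data_model} (W : dawnet D) :=
| FVar : dvar D -> fluent W
| FPlace : place W -> fluent W
| FTrans : fluent W.
Arguments FVar {D W}. Arguments FPlace {D W}. Arguments FTrans {D W}.

Inductive fval (D : data_model) := VNull | VC (c : dconst D) | VB (b : bool).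
Arguments VNull {D}. Arguments VC {D}. Arguments VB {D}.

(* literals of the chosen DNF of the negated guard: v = o  or  not def(v) *)
Inductive glit (D : data_model) := GLEq (v : dvar D) (o : dconst D) | GLUndef (v : dvar D).
Arguments GLEq {D}. Arguments GLUndef {D}.

Definition glsat {D : data_model} (eta : assignment D) (l : glit D) : Prop :=
  match l with GLEq v o => eta v = Some o | GLUndef v => eta v = None end.

Definition glvar {D : data_model} (l : glit D) : dvar D :=
  match l with GLEq v _ => v | GLUndef v => v end.

Definition guard_not_true {D : data_model} (W : dawnet D) (t : trans W) : Prop :=
  exists eta, is_assignment D eta /\ ~ gsat eta (gd W t).

Definition chosen_neg_dnf {D : data_model} (W : dawnet D)
    (ngd : trans W -> list (list (glit D))) : Prop :=
  forall t, guard_not_true W t ->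
    (forall eta, is_assignment D eta ->
       (~ gsat eta (gd W t) <->
        exists k, In k (ngd t) /\ forall l, In l k -> glsat eta l)) /\
    (forall k l, In k (ngd t) -> In l k -> inV' W (glvar l)).

Definition glit_atom {D : data_model} {W : dawnet D} (l : glit D)
  : batom (fluent W) (trans W) (fval D) :=
  match l with
  | GLEq v o => BF (FVar v) (VC o)
  | GLUndef v => BF (FVar v) VNull
  end.

Definition bc_is_fluent {D : data_model} (W : dawnet D) (f : fluent W) : Prop :=
  match f with FVar v => inV' W v | _ => True end.

Definition bc_fdom {D : data_model} (W : dawnet D) (f : fluent W) (x : fval D) : Prop :=
  match f with
  | FVar v => x = VNull \/ exists c, x = VC c /\ adm W v c
  | FPlace _ | FTrans => exists b, x = VB b
  end.

Inductive bc_dyn {D : data_model} (W : dawnet D)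
    (ngd : trans W -> list (list (glit D)))
  : dynamic_law (fluent W) (trans W) (fval D) -> Prop :=
| dyn_inertia_var : forall v o, inV' W v -> bc_fdom W (FVar v) o ->
    bc_dyn W ngd (DynamicLaw (Some (FVar v, o)) [BF (FVar v) o] [BF (FVar v) o])
| dyn_inertia_place : forall p b,
    bc_dyn W ngd (DynamicLaw (Some (FPlace p, VB b)) [BF (FPlace p) (VB b)]
                             [BF (FPlace p) (VB b)])
| dyn_consume : forall t p, pre W p t -> ~ post W t p ->
    bc_dyn W ngd (DynamicLaw (Some (FPlace p, VB false)) [BA t] [])
| dyn_produce : forall t p, post W t p -> ~ pre W p t ->
    bc_dyn W ngd (DynamicLaw (Some (FPlace p, VB true)) [BA t] [])
| dyn_write : forall t v l d, wr W t v = Some l -> In d l ->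
    bc_dyn W ngd (DynamicLaw (Some (FVar v, VC d)) [BA t] [BF (FVar v) (VC d)])
| dyn_delete : forall t v, wr_empty W t v ->
    bc_dyn W ngd (DynamicLaw (Some (FVar v, VNull)) [BA t] [])
| dyn_write_excl : forall t v l d, wr W t v = Some l -> (exists c, In c l) ->
    (d = VNull \/ exists c, d = VC c /\ adm W v c /\ ~ In c l) ->
    bc_dyn W ngd (DynamicLaw None [BA t] [BF (FVar v) d])
| dyn_one_action : forall t s, t <> s ->
    bc_dyn W ngd (DynamicLaw None [BA t; BA s] [])
| dyn_enabled : forall t p, pre W p t ->
    bc_dyn W ngd (DynamicLaw None [BA t; BF (FPlace p) (VB false)] [])
| dyn_trans : forall t,
    bc_dyn W ngd (DynamicLaw (Some (FTrans, VB true)) [BA t] [])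
| dyn_guard : forall t k, guard_not_true W t -> In k (ngd t) ->
    bc_dyn W ngd (DynamicLaw None (BA t :: map glit_atom k) []).

Inductive bc_init {D : data_model} (W : dawnet D) : fluent W -> fval D -> Prop :=
| init_start : bc_init W (FPlace (start W)) (VB true)
| init_place : forall p, p <> start W -> bc_init W (FPlace p) (VB false)
| init_var : forall v, inV' W v -> bc_init W (FVar v) VNull
| init_trans : bc_init W FTrans (VB true).

Definition bc {D : data_model} (W : dawnet D)
    (ngd : trans W -> list (list (glit D)))
  : bc_desc (fluent W) (trans W) (fval D) :=
  BCDesc (bc_is_fluent W) (bc_fdom W) (fun _ => True) (fun _ => False)
         (bc_dyn W ngd) (bc_init W).

Definition bclit {D : data_model} (W : dawnet D) :=
  lit (fluent W) (trans W) (fval D).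

Definition Phi_M {D : data_model} {W : dawnet D} (X : bclit W -> Prop) (i : nat)
  : marking W :=
  fun p => if excluded_middle_informative
                (X (LPos (PA i (BF (FPlace p) (VB true)))))
           then 1 else 0.

Definition Phi_eta {D : data_model} {W : dawnet D} (X : bclit W -> Prop) (i : nat)
  : assignment D :=
  fun v =>
    match excluded_middle_informative
            (exists c, inV' W v /\ X (LPos (PA i (BF (FVar v) (VC c)))))
    with
    | left H => Some (proj1_sig (constructive_indefinite_description _ H))
    | right _ => None
    end.

Definition tau_is {D : data_model} {W : dawnet D} (X : bclit W -> Prop) (i : nat)
    (t : trans W) : Prop :=
  X (LPos (PA i (BA t))).

(* Main.v *)
Require Import Defs.
From Stdlib Require Import List Relations ClassicalEpsilon Classical Lia.
Import ListNotations.
Arguments r_head {Fl Ac Val}. Arguments r_pos {Fl Ac Val}. Arguments r_neg {Fl Ac Val}.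
Arguments dl_head {Fl Ac Val}. Arguments dl_after {Fl Ac Val}. Arguments dl_ifcons {Fl Ac Val}.

Definition SM {D : data_model} (W : dawnet D) ngd ell (X : bclit W -> Prop) :=
  stable_model (P_ell (bc W ngd) ell) X.

Lemma sm_closed {D} (W : dawnet D) ngd ell X r :
  SM W ngd ell X -> P_ell (bc W ngd) ell r ->
  (forall l, In l (r_neg r) -> ~ X l) -> (forall l, In l (r_pos r) -> X l) ->
  exists l, In l (r_head r) /\ X l.
Proof. intros [_ [HC _]] Hr. apply HC; auto. Qed.

Lemma sm_cons {D} (W : dawnet D) ngd ell X a :
  SM W ngd ell X -> X (LPos a) -> X (LNeg a) -> False.
Proof. intros [HC _] H1 H2. exact (HC a (conj H1 H2)). Qed.

Lemma sm_support {D} (W : dawnet D) ngd ell X l :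
  SM W ngd ell X -> X l ->
  exists r, P_ell (bc W ngd) ell r /\ In l (r_head r) /\
    (forall l', In l' (r_pos r) -> X l') /\ (forall l', In l' (r_neg r) -> ~ X l').
Proof.
  intros HS Hl. apply NNPP; intro Hn.
  destruct HS as [HC [HCl Hmin]].
  set (Y := fun x => X x /\ x <> l).
  assert (HY : closed_reduct (P_ell (bc W ngd) ell) X Y).
  { intros r Hr Hneg Hpos.
    destruct (HCl r Hr Hneg (fun l' H => proj1 (Hpos l' H))) as [l' [Hin HX]].
    destruct (classic (l' = l)) as [->|Hne].
    - exfalso; apply Hn; exists r; repeat split; auto.
      intros l'' H; exact (proj1 (Hpos l'' H)).
    - exists l'; split; auto; split; auto. }
  destruct (Hmin Y (fun x H => proj1 H) HY l Hl) as [_ H]; auto.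
Qed.

Lemma dyn_support {D} (W : dawnet D) ngd ell X i f x :
  SM W ngd ell X -> X (LPos (PA (S i) (BF f x))) ->
  exists L, bc_dyn W ngd L /\ dl_head L = Some (f, x) /\ i < ell /\
    (forall A, In A (dl_after L) -> X (at_ i A)) /\
    (forall A, In A (dl_ifcons L) -> ~ X (cneg (S i) A)).
Proof.
  intros HS HX. destruct (sm_support W ngd ell X _ HS HX) as [r [Hr [Hh [Hp Hn]]]].
  destruct Hr; simpl in *.
  - contradiction.
  - destruct L as [h af ic]; simpl in *.
    destruct h as [[f' x']|]; simpl in Hh; [|contradiction].
    destruct Hh as [Hh|[]]. unfold at_ in Hh. injection Hh; intros; subst.
    exists (DynamicLaw (Some (f, x)) af ic); simpl; repeat split; auto.
    + intros A HA; apply Hp, in_map; auto.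
    + intros A HA; apply Hn, in_map; auto.
  - destruct Hh as [Hh|[]]; discriminate.
  - destruct Hh as [Hh|[Hh|[]]]; discriminate.
  - destruct Hh as [Hh|[Hh|[]]]; discriminate.
  - contradiction.
  - destruct Hh as [Hh|[]]; discriminate.
Qed.

Lemma fdom_of {D} (W : dawnet D) ngd ell X i f x :
  SM W ngd ell X -> X (LPos (PA i (BF f x))) -> bc_fdom W f x.
Proof.
  intros HS HX. destruct i as [|i].
  - destruct (sm_support W ngd ell X _ HS HX) as [r [Hr [Hh [Hp Hn]]]].
    destruct Hr; simpl in *.
    + contradiction.
    + destruct (dl_head L) as [[f' x']|]; simpl in Hh; [|contradiction].
      destruct Hh as [Hh|[]]; discriminate.
    + destruct Hh as [Hh|[]]. unfold at_ in Hh. injection Hh; intros; subst.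
      destruct H; simpl; eauto.
    + destruct Hh as [Hh|[Hh|[]]]; try discriminate.
      unfold at_ in Hh. injection Hh; intros; subst. auto.
    + destruct Hh as [Hh|[Hh|[]]]; discriminate.
    + contradiction.
    + destruct Hh as [Hh|[]]; discriminate.
  - destruct (dyn_support W ngd ell X i f x HS HX) as [L [HL [Hh _]]].
    destruct HL; simpl in Hh; try discriminate; injection Hh; intros; subst; simpl; eauto.
    right; exists d; split; auto. exists t, l; auto.
Qed.

Lemma sm_uniq {D} (W : dawnet D) ngd ell X i f x y :
  SM W ngd ell X -> bc_is_fluent W f -> i <= ell ->
  X (LPos (PA i (BF f x))) -> X (LPos (PA i (BF f y))) -> x = y.
Proof.
  intros HS Hf Hi Hx Hy. apply NNPP; intro Hne.
  assert (Hr : P_ell (bc W ngd) ell (Rule [cneg i (BF f x)] [at_ i (BF f y)] [])).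
  { apply P_uniq; simpl; auto; eapply fdom_of; eauto. }
  destruct (sm_closed W ngd ell X _ HS Hr) as [l [Hl HX]]; simpl.
  - intros l' [].
  - intros l' [<-|[]]; exact Hy.
  - destruct Hl as [<-|[]]. exact (sm_cons W ngd ell X _ HS Hx HX).
Qed.

Lemma sm_exist {D} (W : dawnet D) ngd ell X i f l :
  SM W ngd ell X -> bc_is_fluent W f -> i <= ell ->
  (forall x, In x l <-> bc_fdom W f x) ->
  exists x, bc_fdom W f x /\ X (LPos (PA i (BF f x))).
Proof.
  intros HS Hf Hi Hl. apply NNPP; intro Hn.
  assert (Hr : P_ell (bc W ngd) ell (Rule [] [] (map (fun x => at_ i (BF f x)) l))).
  { apply P_exist; simpl; auto. }
  destruct (sm_closed W ngd ell X _ HS Hr) as [l' [[] _]]; simpl.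
  - intros l' Hin. apply in_map_iff in Hin. destruct Hin as [x [<- Hx]].
    intro HX. apply Hn. exists x; split; auto. apply Hl; auto.
  - intros l' [].
Qed.

Lemma exist_bool {D} (W : dawnet D) ngd ell X i f :
  SM W ngd ell X -> i <= ell -> (f = FTrans \/ exists p, f = FPlace p) ->
  exists b, X (LPos (PA i (BF f (VB b)))).
Proof.
  intros HS Hi Hf.
  destruct (sm_exist W ngd ell X i f [VB true; VB false] HS) as [x [Hd HX]]; auto.
  - destruct Hf as [->|[p ->]]; simpl; auto.
  - intros x. destruct Hf as [->|[p ->]]; simpl; split.
    + intros [<-|[<-|[]]]; eauto.
    + intros [[|] ->]; auto.
    + intros [<-|[<-|[]]]; eauto.
    + intros [[|] ->]; auto.
  - destruct Hf as [->|[p ->]]; simpl in Hd; destruct Hd as [b ->]; eauto.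
Qed.

Definition admlist {D} (W : dawnet D) (lt : list (trans W)) v :=
  flat_map (fun t => match wr W t v with Some l => l | None => [] end) lt.

Lemma exist_var {D} (W : dawnet D) ngd ell X i v (lt : list (trans W)) :
  SM W ngd ell X -> i <= ell -> inV' W v -> (forall t, In t lt) ->
  exists x, bc_fdom W (FVar v) x /\ X (LPos (PA i (BF (FVar v) x))).
Proof.
  intros HS Hi Hv Hlt.
  apply (sm_exist W ngd ell X i (FVar v) (VNull :: map VC (admlist W lt v)) HS); auto.
  intros x; simpl; split.
  - intros [<-|Hin]; auto. right. apply in_map_iff in Hin.
    destruct Hin as [c [<- Hc]]. exists c; split; auto.
    unfold admlist in Hc. apply in_flat_map in Hc. destruct Hc as [t [_ Ht]].
    destruct (wr W t v) as [l|] eqn:E; [|destruct Ht]. exists t, l; auto.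
  - intros [<-|[c [-> [t [l [E Hc]]]]]]; auto. right. apply in_map.
    unfold admlist. apply in_flat_map. exists t; split; auto. rewrite E; auto.
Qed.

Lemma phi_eta_some {D} (W : dawnet D) (X : bclit W -> Prop) i v c :
  Phi_eta X i v = Some c -> inV' W v /\ X (LPos (PA i (BF (FVar v) (VC c)))).
Proof.
  unfold Phi_eta. destruct excluded_middle_informative as [H|H]; [|discriminate].
  destruct (constructive_indefinite_description _ H) as [c' Hc']; simpl.
  intros E; injection E; intros <-; auto.
Qed.

Lemma phi_eta_of {D} (W : dawnet D) ngd ell X i v c :
  SM W ngd ell X -> i <= ell -> inV' W v -> X (LPos (PA i (BF (FVar v) (VC c)))) ->
  Phi_eta X i v = Some c.
Proof.
  intros HS Hi Hv HX. destruct (Phi_eta X i v) as [c'|] eqn:E.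
  - apply phi_eta_some in E. destruct E as [_ E].
    assert (VC c' = VC c) by (eapply (sm_uniq W ngd ell X i (FVar v)); simpl; eauto). congruence.
  - unfold Phi_eta in E. destruct excluded_middle_informative as [H|H]; [discriminate|].
    exfalso; apply H; eauto.
Qed.

Lemma phi_eta_null {D} (W : dawnet D) ngd ell X i v :
  SM W ngd ell X -> i <= ell -> X (LPos (PA i (BF (FVar v) VNull))) ->
  Phi_eta X i v = None.
Proof.
  intros HS Hi HX. destruct (Phi_eta X i v) as [c'|] eqn:E; auto.
  apply phi_eta_some in E. destruct E as [Hv E].
  assert (VC c' = VNull) by (eapply (sm_uniq W ngd ell X i (FVar v)); simpl; eauto). discriminate.
Qed.

Lemma phi_eta_notV {D} (W : dawnet D) (X : bclit W -> Prop) i v :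
  ~ inV' W v -> Phi_eta X i v = None.
Proof.
  intros Hv. destruct (Phi_eta X i v) as [c'|] eqn:E; auto.
  apply phi_eta_some in E. tauto.
Qed.

Lemma phi_M_true {D} (W : dawnet D) (X : bclit W -> Prop) i p :
  X (LPos (PA i (BF (FPlace p) (VB true)))) -> Phi_M X i p = 1.
Proof. intros H. unfold Phi_M. destruct excluded_middle_informative; tauto. Qed.

Lemma phi_M_false {D} (W : dawnet D) ngd ell X i p :
  SM W ngd ell X -> i <= ell ->
  X (LPos (PA i (BF (FPlace p) (VB false)))) -> Phi_M X i p = 0.
Proof.
  intros HS Hi H. unfold Phi_M. destruct excluded_middle_informative as [H'|]; auto.
  assert (VB true = VB false :> fval D) by (eapply sm_uniq; eauto; exact I). discriminate.
Qed.

Lemma phi_M_cases {D} (W : dawnet D) ngd ell X i p :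
  SM W ngd ell X -> i <= ell ->
  (Phi_M X i p = 1 /\ X (LPos (PA i (BF (FPlace p) (VB true))))) \/
  (Phi_M X i p = 0 /\ X (LPos (PA i (BF (FPlace p) (VB false))))).
Proof.
  intros HS Hi. destruct (exist_bool W ngd ell X i (FPlace p) HS Hi) as [[|] H]; eauto.
  - left; split; auto; apply phi_M_true; auto.
  - right; split; auto; eapply phi_M_false; eauto.
Qed.

Lemma frame_place {D} (W : dawnet D) ngd ell X i p b :
  SM W ngd ell X -> X (LPos (PA (S i) (BF (FPlace p) (VB b)))) ->
  i < ell /\
  (X (LPos (PA i (BF (FPlace p) (VB b)))) \/
   (exists t, X (LPos (PA i (BA t))) /\ pre W p t /\ ~ post W t p /\ b = false) \/
   (exists t, X (LPos (PA i (BA t))) /\ post W t p /\ ~ pre W p t /\ b = true)).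
Proof.
  intros HS HX. destruct (dyn_support W ngd ell X i _ _ HS HX) as [L [HL [Hh [Hi [Ha Hc]]]]].
  split; auto.
  destruct HL; simpl in *; try discriminate; injection Hh; intros; subst.
  - left. apply (Ha _ (or_introl eq_refl)).
  - right; left. exists t; repeat split; auto. apply (Ha _ (or_introl eq_refl)).
  - right; right. exists t; repeat split; auto. apply (Ha _ (or_introl eq_refl)).
Qed.

Lemma frame_var {D} (W : dawnet D) ngd ell X i v x :
  SM W ngd ell X -> X (LPos (PA (S i) (BF (FVar v) x))) ->
  X (LPos (PA i (BF (FVar v) x))) \/
  (exists t l d, X (LPos (PA i (BA t))) /\ wr W t v = Some l /\ In d l /\ x = VC d) \/
  (exists t, X (LPos (PA i (BA t))) /\ wr_empty W t v /\ x = VNull).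
Proof.
  intros HS HX. destruct (dyn_support W ngd ell X i _ _ HS HX) as [L [HL [Hh [Hi [Ha Hc]]]]].
  destruct HL; simpl in *; try discriminate; injection Hh; intros; subst.
  - left. apply (Ha _ (or_introl eq_refl)).
  - right; left. exists t, l, d; repeat split; auto. apply (Ha _ (or_introl eq_refl)).
  - right; right. exists t; repeat split; auto. apply (Ha _ (or_introl eq_refl)).
Qed.

Lemma frame_trans {D} (W : dawnet D) ngd ell X i x :
  SM W ngd ell X -> X (LPos (PA (S i) (BF FTrans x))) ->
  exists t, X (LPos (PA i (BA t))).
Proof.
  intros HS HX. destruct (dyn_support W ngd ell X i _ _ HS HX) as [L [HL [Hh [Hi [Ha Hc]]]]].
  destruct HL; simpl in *; try discriminate; injection Hh; intros; subst.
  exists t. apply (Ha _ (or_introl eq_refl)).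
Qed.

Lemma dyn_constraint {D} (W : dawnet D) ngd ell X i af ic :
  SM W ngd ell X -> bc_dyn W ngd (DynamicLaw None af ic) -> i < ell ->
  (forall A, In A af -> X (LPos (PA i A))) ->
  (forall A, In A ic -> ~ X (LNeg (PA (S i) A))) -> False.
Proof.
  intros HS HL Hi Ha Hc.
  assert (Hr := @P_dynamic _ _ _ (bc W ngd) ell _ i HL Hi). simpl in Hr.
  destruct (sm_closed W ngd ell X _ HS Hr) as [l [[] _]]; simpl.
  - intros l Hl. apply in_map_iff in Hl. destruct Hl as [A [<- HA]]. apply Hc; auto.
  - intros l Hl. apply in_map_iff in Hl. destruct Hl as [A [<- HA]]. apply Ha; auto.
Qed.

Lemma dyn_fire {D} (W : dawnet D) ngd ell X i f x af ic :
  SM W ngd ell X -> bc_dyn W ngd (DynamicLaw (Some (f, x)) af ic) -> i < ell ->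
  (forall A, In A af -> X (LPos (PA i A))) ->
  (forall A, In A ic -> ~ X (LNeg (PA (S i) A))) -> X (LPos (PA (S i) (BF f x))).
Proof.
  intros HS HL Hi Ha Hc.
  assert (Hr := @P_dynamic _ _ _ (bc W ngd) ell _ i HL Hi). simpl in Hr.
  destruct (sm_closed W ngd ell X _ HS Hr) as [l [[<-|[]] H]]; simpl; auto;
  intros l Hl; apply in_map_iff in Hl; destruct Hl as [A [<- HA]]; [apply Hc|apply Ha]; auto.
Qed.

Lemma act_uniq {D} (W : dawnet D) ngd ell X i t s :
  SM W ngd ell X -> i < ell -> X (LPos (PA i (BA t))) -> X (LPos (PA i (BA s))) -> s = t.
Proof.
  intros HS Hi Ht Hs. apply NNPP; intro Hne.
  apply (dyn_constraint W ngd ell X i [BA t; BA s] [] HS).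
  - constructor; auto.
  - auto.
  - intros A [<-|[<-|[]]]; auto.
  - intros A [].
Qed.

Definition Mf {D} (W : dawnet D) (t : trans W) (M : marking W) : marking W :=
  fun q => if excluded_middle_informative (pre W q t /\ ~ post W t q) then M q - 1
           else if excluded_middle_informative (post W t q /\ ~ pre W q t) then M q + 1
           else M q.

Lemma Mf_ok {D} (W : dawnet D) (t : trans W) (M : marking W) : forall p,
     (pre W p t /\ ~ post W t p -> Mf W t M p = M p - 1) /\
     (post W t p /\ ~ pre W p t -> Mf W t M p = M p + 1) /\
     (~ (pre W p t /\ ~ post W t p) -> ~ (post W t p /\ ~ pre W p t) ->
        Mf W t M p = M p).
Proof.
  intros p; unfold Mf; repeat split; intros;
  repeat destruct excluded_middle_informative; tauto.
Qed.

Lemma inV'_wr {D} (W : dawnet D) t v l : wr W t v = Some l -> inV' W v.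
Proof. intros E. left. exists t. congruence. Qed.

Lemma step {D} (W : dawnet D) ngd ell X i t :
  is_dawnet W -> one_safe W -> chosen_neg_dnf W ngd -> SM W ngd ell X -> i < ell ->
  reachable W (Phi_M X i) (Phi_eta X i) -> X (LPos (PA i (BA t))) ->
  valid_firing W (Phi_M X i) (Phi_eta X i) t (Phi_M X (S i)) (Phi_eta X (S i)).
Proof.
  intros Hdaw Hsafe Hdnf HS Hi Hreach Ht.
  assert (Hi' : i <= ell) by lia.
  assert (HSi : S i <= ell) by lia.
  destruct Hdaw as [_ [_ [[lt Hlt] [_ [_ [_ [Hwr _]]]]]]].
  assert (Hen : forall p, pre W p t -> Phi_M X i p > 0).
  { intros p Hp. destruct (phi_M_cases W ngd ell X i p HS Hi') as [[-> _]|[_ H]]; [lia|].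
    exfalso. apply (dyn_constraint W ngd ell X i [BA t; BF (FPlace p) (VB false)] [] HS).
    - constructor; auto.
    - auto.
    - intros A [<-|[<-|[]]]; auto.
    - intros A []. }
  assert (Hassign : is_assignment D (Phi_eta X i)).
  { intros v c E. apply phi_eta_some in E. destruct E as [_ E].
    apply (fdom_of W ngd ell X) in E; auto. simpl in E.
    destruct E as [E|[c' [E [t' [l [E1 E2]]]]]]; [discriminate|].
    injection E; intros <-. eapply Hwr; eauto. }
  assert (Hguard : gsat (Phi_eta X i) (gd W t)).
  { destruct (classic (guard_not_true W t)) as [Hg|Hg].
    - apply NNPP; intro Hng. destruct (Hdnf t Hg) as [Hiff Hvars].
      destruct (proj1 (Hiff _ Hassign) Hng) as [k [Hk Hl]].
      apply (dyn_constraint W ngd ell X i (BA t :: map glit_atom k) [] HS).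
      + apply dyn_guard; auto.
      + auto.
      + intros A [<-|HA]; auto.
        apply in_map_iff in HA. destruct HA as [l [<- Hlk]].
        specialize (Hl l Hlk). assert (Hv := Hvars k l Hk Hlk).
        destruct l as [v o|v]; simpl in *.
        * apply phi_eta_some in Hl; tauto.
        * destruct (exist_var W ngd ell X i v lt HS Hi' Hv Hlt) as [x [Hx HX]].
          destruct Hx as [->|[c [-> _]]]; auto.
          rewrite (phi_eta_of W ngd ell X i v c HS Hi' Hv HX) in Hl. discriminate.
      + intros A [].
    - apply NNPP; intro Hng. apply Hg. exists (Phi_eta X i); auto. }
  assert (Hf : forall v, wr W t v = None -> Phi_eta X (S i) v = Phi_eta X i v).
  { intros v E. destruct (classic (inV' W v)) as [Hv|Hv].
    2:{ rewrite !phi_eta_notV; auto. }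
    destruct (exist_var W ngd ell X (S i) v lt HS HSi Hv Hlt) as [x [Hx HX]].
    assert (HX0 : X (LPos (PA i (BF (FVar v) x)))).
    { destruct (frame_var W ngd ell X i v x HS HX) as [H|[[t' [l [d [H1 [H2 _]]]]]|[t' [H1 [[l [H2 _]] _]]]]]; auto.
      - rewrite (act_uniq W ngd ell X i t t' HS Hi Ht H1) in H2. congruence.
      - rewrite (act_uniq W ngd ell X i t t' HS Hi Ht H1) in H2. congruence. }
    destruct Hx as [->|[c [-> _]]].
    - rewrite !(phi_eta_null W ngd ell X); auto.
    - rewrite !(phi_eta_of W ngd ell X _ v c); auto. }
  assert (Hin : forall v l c, wr W t v = Some l -> Phi_eta X (S i) v = Some c -> In c l).
  { intros v l c E E'. apply phi_eta_some in E'. destruct E' as [Hv HX].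
    assert (Hd := fdom_of W ngd ell X _ _ _ HS HX). simpl in Hd.
    destruct Hd as [Hd|[c' [Hc' Hadm]]]; [discriminate|]. injection Hc'; intros <-.
    destruct l as [|c0 l0].
    - exfalso.
      assert (HN : X (LPos (PA (S i) (BF (FVar v) VNull)))).
      { apply (dyn_fire W ngd ell X i _ _ [BA t] [] HS); try assumption.
        - apply dyn_delete. exists []; split; auto.
        - intros A [<-|[]]; auto.
        - intros A []. }
      assert (VC c = VNull :> fval D) by (eapply (sm_uniq W ngd ell X (S i) (FVar v)); simpl; eauto).
      discriminate.
    - apply NNPP; intro Hnin.
      apply (dyn_constraint W ngd ell X i [BA t] [BF (FVar v) (VC c)] HS); try assumption.
      + apply (dyn_write_excl W ngd t v (c0 :: l0) (VC c) E).
        * exists c0; simpl; auto.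
        * right. exists c; auto.
      + intros A [<-|[]]; auto.
      + intros A [<-|[]]. intro HN. exact (sm_cons W ngd ell X _ HS HX HN). }
  assert (Hdom : forall v, Phi_eta X (S i) v <> None <->
             ((Phi_eta X i v <> None \/ wr_nonempty W t v) /\ ~ wr_empty W t v)).
  { intros v. destruct (wr W t v) as [l|] eqn:E.
    - assert (Hv := inV'_wr W t v l E).
      destruct l as [|c0 l0].
      + assert (HN : X (LPos (PA (S i) (BF (FVar v) VNull)))).
        { apply (dyn_fire W ngd ell X i _ _ [BA t] [] HS); try assumption.
          - apply dyn_delete. exists []; split; auto.
          - intros A [<-|[]]; auto.
          - intros A []. }
        rewrite (phi_eta_null W ngd ell X); auto.
        split; [tauto|]. intros [_ H]. exfalso; apply H. exists []; split; auto.
      + assert (Hne : Phi_eta X (S i) v <> None).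
        { destruct (exist_var W ngd ell X (S i) v lt HS HSi Hv Hlt) as [x [Hx HX]].
          destruct Hx as [->|[c [-> _]]].
          - exfalso.
            apply (dyn_constraint W ngd ell X i [BA t] [BF (FVar v) VNull] HS); try assumption.
            + apply (dyn_write_excl W ngd t v (c0 :: l0) VNull E); auto.
              exists c0; simpl; auto.
            + intros A [<-|[]]; auto.
            + intros A [<-|[]]. intro HN. exact (sm_cons W ngd ell X _ HS HX HN).
          - rewrite (phi_eta_of W ngd ell X _ v c); auto. discriminate. }
        split; intros _; auto. split.
        * right. exists (c0 :: l0), c0; simpl; auto.
        * intros [l [E' Hl]]. rewrite E in E'. injection E'; intros <-. apply (Hl c0); simpl; auto.
    - rewrite (Hf v E). split.
      + intros H; split; auto. intros [l [E' _]]; congruence.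
      + intros [[H|[l [c [E' _]]]] _]; auto; congruence. }
  assert (Hrest : forall M', (forall p,
     (pre W p t /\ ~ post W t p -> M' p = Phi_M X i p - 1) /\
     (post W t p /\ ~ pre W p t -> M' p = Phi_M X i p + 1) /\
     (~ (pre W p t /\ ~ post W t p) -> ~ (post W t p /\ ~ pre W p t) ->
        M' p = Phi_M X i p)) ->
     valid_firing W (Phi_M X i) (Phi_eta X i) t M' (Phi_eta X (S i))).
  { intros M' HM. repeat split; auto; try apply HM; apply Hdom; auto. }
  apply Hrest. intros p. repeat split.
  - intros [Hp Hnp].
    assert (HN : X (LPos (PA (S i) (BF (FPlace p) (VB false))))).
    { apply (dyn_fire W ngd ell X i _ _ [BA t] [] HS); try assumption.
      - apply dyn_consume; auto.
      - intros A [<-|[]]; auto.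
      - intros A []. }
    rewrite (phi_M_false W ngd ell X); auto.
    specialize (Hen p Hp).
    destruct (phi_M_cases W ngd ell X i p HS Hi') as [[-> _]|[-> _]]; lia.
  - intros [Hp Hnp].
    assert (HN : X (LPos (PA (S i) (BF (FPlace p) (VB true))))).
    { apply (dyn_fire W ngd ell X i _ _ [BA t] [] HS); try assumption.
      - apply dyn_produce; auto.
      - intros A [<-|[]]; auto.
      - intros A []. }
    rewrite (phi_M_true W); auto.
    destruct (phi_M_cases W ngd ell X i p HS Hi') as [[E _]|[-> _]]; [|lia].
    exfalso.
    assert (HR : reachable W (Mf W t (Phi_M X i)) (Phi_eta X (S i))).
    { eapply reach_step; eauto. apply Hrest. apply Mf_ok. }
    assert (H1 := Hsafe _ _ HR p).
    rewrite (proj1 (proj2 (Mf_ok W t (Phi_M X i) p)) (conj Hp Hnp)) in H1. lia.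
  - intros H1 H2.
    destruct (exist_bool W ngd ell X (S i) (FPlace p) HS HSi) as [b Hb]; eauto.
    destruct (frame_place W ngd ell X i p b HS Hb) as [_ Hfr].
    destruct (phi_M_cases W ngd ell X i p HS Hi') as [[-> HT]|[-> HF]].
    + destruct b; [apply phi_M_true; auto|]. exfalso.
      destruct Hfr as [H|[[t' [Ht' [Hp [Hnp _]]]]|[t' [_ [_ [_ E]]]]]]; [|..|discriminate].
      * assert (VB true = VB false :> fval D) by (eapply (sm_uniq W ngd ell X i (FPlace p)); simpl; eauto).
        discriminate.
      * rewrite <- (act_uniq W ngd ell X i t t' HS Hi Ht Ht') in *. tauto.
    + destruct b; [|eapply phi_M_false; eauto]. exfalso.
      destruct Hfr as [H|[[t' [_ [_ [_ E]]]]|[t' [Ht' [Hp [Hnp _]]]]]]; [|discriminate|].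
      * assert (VB false = VB true :> fval D) by (eapply (sm_uniq W ngd ell X i (FPlace p)); simpl; eauto).
        discriminate.
      * rewrite <- (act_uniq W ngd ell X i t t' HS Hi Ht Ht') in *. tauto.
Qed.

Lemma init_fact {D} (W : dawnet D) ngd ell X f x :
  SM W ngd ell X -> bc_init W f x -> X (LPos (PA 0 (BF f x))).
Proof.
  intros HS Hi.
  assert (Hr : P_ell (bc W ngd) ell (Rule [at_ 0 (BF f x)] [] [])) by (apply P_init; exact Hi).
  destruct (sm_closed W ngd ell X _ HS Hr) as [l [[<-|[]] H]]; simpl; auto; intros l [].
Qed.

Lemma get_action {D} (W : dawnet D) ngd ell X i :
  SM W ngd ell X -> i < ell -> exists t, X (LPos (PA i (BA t))).
Proof.
  intros HS Hi. destruct (exist_bool W ngd ell X (S i) FTrans HS) as [b Hb]; auto.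
  eapply frame_trans; eauto.
Qed.

Lemma reach_all {D} (W : dawnet D) ngd ell X :
  is_dawnet W -> one_safe W -> chosen_neg_dnf W ngd -> SM W ngd ell X ->
  forall i, i <= ell -> reachable W (Phi_M X i) (Phi_eta X i).
Proof.
  intros Hd Hs Hn HS i. induction i as [|i IH]; intros Hi.
  - apply reach_init.
    + apply phi_M_true. apply (init_fact W ngd ell); auto. constructor.
    + intros p Hp. apply (phi_M_false W ngd ell X); try lia; auto.
      apply (init_fact W ngd ell); auto. constructor; auto.
    + intros v. destruct (classic (inV' W v)) as [Hv|Hv].
      * apply (phi_eta_null W ngd ell X); try lia; auto.
        apply (init_fact W ngd ell); auto. constructor; auto.
      * apply phi_eta_notV; auto.
  - destruct (get_action W ngd ell X i HS) as [t Ht]; try lia.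
    eapply reach_step. apply IH; lia.
    apply (step W ngd ell X i t); auto; try lia. apply IH; lia.
Qed.

Theorem mainTheorem6 :
  forall (D : data_model) (W : dawnet D)
         (ngd : trans W -> list (list (glit D))) (ell : nat)
         (X : bclit W -> Prop),
    is_dawnet W ->
    one_safe W ->
    chosen_neg_dnf W ngd ->
    stable_model (P_ell (bc W ngd) ell) X ->
    forall i, i < ell ->
      exists t, tau_is X i t /\ (forall s, tau_is X i s -> s = t) /\
        valid_firing W (Phi_M X i) (Phi_eta X i) t
                       (Phi_M X (S i)) (Phi_eta X (S i)).
Proof.
  intros D W ngd ell X Hd Hs Hn HS i Hi.
  destruct (get_action W ngd ell X i HS Hi) as [t Ht].
  exists t. split; [exact Ht|]. split.
  - intros s Hs'. apply (act_uniq W ngd ell X i t s HS Hi Ht Hs').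
  - apply (step W ngd ell X i t); auto. apply (reach_all W ngd ell X); auto; lia.
Qed.
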